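(* Let $K\ge2$, $0<q<p$ with $p+(K-1)q=1$, and $\phi\in\Delta$. If $\theta$ is an MLE for $\phi$, then for any $i,j\in\{1,\dots,K\}$, $\phi_i\le\phi_j$ implies $\theta_i\le\theta_j$.
   Context: $\Delta=\{\theta\in\mathbb{R}^K:\theta_i\ge0,\sum_i\theta_i=1\}$. $\mathcal{M}(\theta)_y=q+(p-q)\theta_y$. $\theta\in\Delta$ is an MLE for $\phi$ if it minimizes $D_{KL}(\phi,\mathcal{M}(\theta))=\sum_i\phi_i\log(\phi_i/\mathcal{M}(\theta)_i)$ (convention $0\log(0/\cdot)=0$) over $\Delta$ (for an empirical histogram $\phi$ of observed outputs $y_1,\dots,y_N$ this is equivalent to maximizing the likelihood $\prod_u\mathcal{M}(\theta)_{y_u}$). *)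

(* Defs.v *)
From mathcomp Require Import all_boot all_order all_algebra.
From mathcomp Require Import all_classical all_reals exp.
Set Implicit Arguments. Unset Strict Implicit. Unset Printing Implicit Defensive.
Import Order.TTheory GRing.Theory Num.Theory.
Local Open Scope ring_scope.

Definition simplex (R : realType) (K : nat) (theta : 'I_K -> R) : Prop :=
  (forall i, 0 <= theta i) /\ \sum_(i < K) theta i = 1.

Definition model (R : realType) (K : nat) (p q : R) (theta : 'I_K -> R) (y : 'I_K) : R :=
  q + (p - q) * theta y.

Definition KL (R : realType) (K : nat) (phi mu : 'I_K -> R) : R :=
  \sum_(i < K) (if phi i == 0 then 0 else phi i * ln (phi i / mu i)).

Definition is_MLE (R : realType) (K : nat) (p q : R) (phi theta : 'I_K -> R) : Prop :=
  simplex theta /\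
  forall theta' : 'I_K -> R, simplex theta' ->
    KL phi (model p q theta) <= KL phi (model p q theta').

(* Main.v *)
Require Import Defs.
From mathcomp Require Import all_boot all_order all_algebra.
From mathcomp Require Import all_classical all_reals exp.
From mathcomp Require Import ring lra.
Import Order.TTheory GRing.Theory Num.Theory.
Local Open Scope ring_scope.
Set Implicit Arguments. Unset Strict Implicit.

Lemma sum2 (R : realType) (K : nat) (f g : 'I_K -> R) (i j : 'I_K) :
  i != j -> (forall x, x != i -> x != j -> g x = f x) ->
  \sum_(x < K) g x = \sum_(x < K) f x + (g i - f i) + (g j - f j).
Proof.
move=> ij H.
have e : forall h : 'I_K -> R, \sum_(x < K) h x =
    h i + (h j + \sum_(x < K | (x != i) && (x != j)) h x).
  move=> h; rewrite (bigD1 i) //= (bigD1 j) //= eq_sym.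
  by [].
rewrite !e (eq_bigr (fun x => f x)); last by move=> x /andP[a b]; rewrite H.
lra.
Qed.

Definition LL (R : realType) (K : nat) (p q : R) (phi theta : 'I_K -> R) : R :=
  \sum_(k < K) phi k * ln (model p q theta k).

Lemma KL_eq (R : realType) (K : nat) (p q : R) (phi theta : 'I_K -> R) :
  (forall k, 0 <= phi k) -> (forall k, 0 < model p q theta k) ->
  KL phi (model p q theta) = \sum_(k < K) phi k * ln (phi k) - LL p q phi theta.
Proof.
move=> h0 hm; rewrite /KL /LL -sumrB; apply: eq_bigr => k _.
case: eqP => [->|hk]; first by rewrite !mul0r subr0.
have hp : 0 < phi k by rewrite lt_neqAle eq_sym h0 andbT; apply/eqP.
rewrite ln_div ?posrE //; lra.
Qed.

Theorem theorem6 (R : realType) (K : nat) (p q : R) (phi theta : 'I_K -> R) :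
  (2 <= K)%N -> 0 < q -> q < p -> p + (K - 1)%:R * q = 1 ->
  simplex phi -> is_MLE p q phi theta ->
  forall i j : 'I_K, phi i <= phi j -> theta i <= theta j.
Proof.
move=> _ q0 qp _ [phi0 phi1] [[th0 th1] Hmin] i j Hij.
rewrite leNgt; apply/negP => Hlt.
have ij : i != j by apply/eqP => e; move: Hlt; rewrite e ltxx.
have mpos : forall t : 'I_K -> R, (forall k, 0 <= t k) -> forall k, 0 < model p q t k.
  move=> t ht k; rewrite /model; have := ht k.
  have : 0 < p - q by lra.
  move=> a b; have := mulr_ge0 (ltW a) b; lra.
have Hopt : forall t : 'I_K -> R, simplex t -> LL p q phi t <= LL p q phi theta.
  move=> t [ht0 ht1]; have := Hmin t (conj ht0 ht1).
  rewrite !KL_eq //; [lra | exact: mpos..].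
have thj := th0 j.
have pq : 0 < p - q by lra.
case: (eqVneq (phi j) 0) => [phij0 | phij].
- have phii : phi i = 0 by apply/eqP; rewrite eq_le phi0 andbT -phij0.
  case: (pickP (fun k : 'I_K => 0 < phi k)) => [k hk | none]; last first.
    have : \sum_(k < K) phi k = 0.
      apply: big1 => k _; apply/eqP; rewrite eq_le phi0 andbT.
      by rewrite leNgt none.
    lra.
  have ki : k != i by apply/eqP => e; move: hk; rewrite e phii ltxx.
  have ik : i != k by rewrite eq_sym.
  pose t := fun x => if x == i then 0 else if x == k then theta k + theta i else theta x.
  have ht0 : forall x, 0 <= t x.
    move=> x; rewrite /t; case: eqP => _ //; case: eqP => _ //.
    by apply: addr_ge0.
  have st : simplex t.
    split => //; rewrite (sum2 (f:=theta) ik).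
      by rewrite /t eqxx (negbTE ki) eqxx th1; lra.
    by move=> x /negbTE a /negbTE b; rewrite /t a b.
  have := Hopt t st.
  rewrite /LL (sum2 (f:=fun x => phi x * ln (model p q theta x)) ik); last first.
    by move=> x /negbTE a /negbTE b; rewrite /model /t a b.
  rewrite /model /t eqxx (negbTE ki) eqxx phii !mul0r.
  have hlt : ln (q + (p - q) * theta k) < ln (q + (p - q) * (theta k + theta i)).
    rewrite ltr_ln ?posrE; last 2 first.
    - by have := mpos _ th0 k.
    - have := mpos _ ht0 k; by rewrite /model /t (negbTE ki) eqxx.
    have : 0 < (p - q) * theta i by apply: mulr_gt0 => //; lra.
    lra.
  have : 0 < phi k * (ln (q + (p - q) * (theta k + theta i)) - ln (q + (p - q) * theta k)).
    by apply: mulr_gt0 => //; lra.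
  lra.
- have phjp : 0 < phi j by rewrite lt_neqAle eq_sym phij phi0.
  have ji : j != i by rewrite eq_sym.
  pose a := (theta i + theta j) / 2.
  pose t := fun x => if x == i then a else if x == j then a else theta x.
  have ha : 0 <= a by rewrite /a; have := th0 i; lra.
  have ht0 : forall x, 0 <= t x.
    by move=> x; rewrite /t; case: eqP => _ //; case: eqP => _ //.
  have st : simplex t.
    split => //; rewrite (sum2 (f:=theta) ij).
      by rewrite /t eqxx (negbTE ji) eqxx th1 /a; lra.
    by move=> x /negbTE u /negbTE v; rewrite /t u v.
  have := Hopt t st.
  rewrite /LL (sum2 (f:=fun x => phi x * ln (model p q theta x)) ij); last first.
    by move=> x /negbTE u /negbTE v; rewrite /model /t u v.
  rewrite /model /t eqxx (negbTE ji) eqxx.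
  set mi := q + (p - q) * theta i.
  set mj := q + (p - q) * theta j.
  set M := q + (p - q) * a.
  have hmi : 0 < mi by have := mpos _ th0 i.
  have hmj : 0 < mj by have := mpos _ th0 j.
  have hM : M = (mi + mj) / 2 by rewrite /M /mi /mj /a; field.
  have hlt : mj < mi.
    rewrite /mi /mj; have : (p - q) * theta j < (p - q) * theta i by rewrite ltr_pM2l.
    lra.
  have hM0 : 0 < M by rewrite hM; lra.
  have hB : ln mj < ln M by rewrite ltr_ln ?posrE // hM; lra.
  have hAB : ln mi + ln mj < ln M + ln M.
    rewrite -!lnM ?posrE // ltr_ln ?posrE ?mulr_gt0 //.
    have h : 0 < (mi - mj) * (mi - mj) by apply: mulr_gt0; lra.
    have e : M * M = mi * mj + (mi - mj) * (mi - mj) / 4 by rewrite hM; field.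
    rewrite e; move: h; set s := (mi - mj) * (mi - mj); move=> h; lra.
  have : 0 < phi i * (ln M - ln mi) + phi j * (ln M - ln mj).
    have e : phi i * (ln M - ln mi) + phi j * (ln M - ln mj) =
      phi i * ((ln M - ln mi) + (ln M - ln mj)) + (phi j - phi i) * (ln M - ln mj)
      by ring.
    rewrite e.
    case: (eqVneq (phi i) 0) => [-> | pi0].
      rewrite mul0r add0r subr0; apply: mulr_gt0 => //; lra.
    have phip : 0 < phi i by rewrite lt_neqAle eq_sym pi0 phi0.
    have : 0 < phi i * ((ln M - ln mi) + (ln M - ln mj)) by apply: mulr_gt0 => //; lra.
    have : 0 <= (phi j - phi i) * (ln M - ln mj) by apply: mulr_ge0; lra.
    lra.
  lra.
Qed.
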